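(* Let $k\ge 2$. In the online version of balanced interval $k$-coloring, the imbalance is unbounded: for every (deterministic) online algorithm and every $M\in\mathbb{N}$, there is a finite input sequence of intervals on which the coloring produced by the algorithm has imbalance greater than $M$.
   Context: Online model: closed intervals arrive one at a time in order of their startpoints; upon arrival the full interval (including its endpoint) is revealed and the algorithm must irrevocably assign it a color from $\{1,\dots,k\}$. For a coloring $\chi$ of a finite set of intervals, let $c_i(x)$ be the number of intervals containing $x$ with color $i$; the imbalance of $\chi$ is $\max_{x\in\mathbb{R}}\max_{i,j}|c_i(x)-c_j(x)|$. *)

(* Defs.v *)
From HB Require Import structures.
From mathcomp Require Import all_boot all_order all_algebra.
From mathcomp Require Import reals.
Set Implicit Arguments. Unset Strict Implicit. Unset Printing Implicit Defensive.
Import Order.TTheory GRing.Theory Num.Theory.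
Local Open Scope ring_scope.

Definition contains (R : realType) (I : R * R) (x : R) : bool :=
  (I.1 <= x) && (x <= I.2).

Definition valid_input (R : realType) (s : seq (R * R)) : bool :=
  all (fun I : R * R => I.1 <= I.2) s &&
  sorted (fun I J : R * R => I.1 <= J.1) s.

(* A deterministic online k-coloring algorithm: upon arrival of an interval,
   it sees the whole history of intervals so far (ending with the current,
   fully revealed interval) and irrevocably outputs a color in {1..k}
   (represented as 'I_k).  Its previous colors are determined by the
   history, so this captures all deterministic online algorithms. *)
Definition online_algorithm (R : realType) (k : nat) := seq (R * R) -> 'I_k.

Definition online_coloring (R : realType) (k : nat)
  (alg : online_algorithm R k) (s : seq (R * R)) : seq 'I_k :=
  [seq alg (take i.+1 s) | i <- iota 0 (size s)].

Definition color_count (R : realType) (k : nat)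
  (s : seq (R * R)) (chi : seq 'I_k) (i : 'I_k) (x : R) : nat :=
  count (fun p : (R * R) * 'I_k => (p.2 == i) && contains p.1 x) (zip s chi).

(* "imbalance of chi > M", where the imbalance is
   max_x max_{i,j} |c_i(x) - c_j(x)| (the maximum is attained since only
   finitely many values occur, so exceeding M means some x, i, j does). *)
Definition imbalance_gt (R : realType) (k : nat)
  (s : seq (R * R)) (chi : seq 'I_k) (M : nat) : Prop :=
  exists (x : R) (i j : 'I_k),
    (M < `| (color_count s chi i x)%:Z - (color_count s chi j x)%:Z |)%N.

(* Main.v *)
Require Import Defs.
From HB Require Import structures.
From mathcomp Require Import all_boot all_order all_algebra.
From mathcomp Require Import reals.
From mathcomp Require Import zify ring lra.
Set Implicit Arguments. Unset Strict Implicit. Unset Printing Implicit Defensive.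
Import Order.TTheory GRing.Theory Num.Theory.

Section Aux.
Variable R : realType.
Variable k : nat.
Variable alg : online_algorithm R k.
Local Open Scope ring_scope.

Fixpoint build (n : nat) : seq (R * R) * R * R :=
  match n with
  | 0%N => ([::], 0, 1)
  | n'.+1 =>
    let: (s, f, p) := build n' in
    let r := (f + p) / 2 in
    let s' := rcons s (0, r) in
    if nat_of_ord (alg s') == 0%N then (s', f, r) else (s', r, p)
  end.

Lemma oc_rcons (s : seq (R * R)) x :
  online_coloring alg (rcons s x) = rcons (online_coloring alg s) (alg (rcons s x)).
Proof.
rewrite /online_coloring size_rcons -addn1 iotaD map_cat /= add0n -cats1 -!cats1.
congr (_ ++ [:: alg _]); last by rewrite take_oversize // size_cat /= addn1.
apply/eq_in_map => i; rewrite mem_iota add0n => /= Hi.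
by rewrite takel_cat.
Qed.

Lemma oc_size s : size (online_coloring alg s) = size s.
Proof. by rewrite size_map size_iota. Qed.

Definition good (f p : R) (q : (R * R) * 'I_k) : bool :=
  (q.1.1 == 0) && (0 <= q.1.2) &&
  (if nat_of_ord q.2 == 0%N then p <= q.1.2 else q.1.2 <= f).

Lemma build_inv n :
  let: (s, f, p) := build n in
  [/\ size s = n, 0 <= f, f < p,
      all (fun I : R * R => (I.1 == 0) && (0 <= I.2)) s &
      all (good f p) (zip s (online_coloring alg s))].
Proof.
elim: n => [|n IH] /=; first by split => //; lra.
case: (build n) IH => [[s f] p] [Hs Hf Hfp Hall Hg] /=.
set r := (f + p) / 2.
have Hr1 : f < r by rewrite /r; lra.
have Hr2 : r < p by rewrite /r; lra.
case: ifP => H0 /=; rewrite oc_rcons zip_rcons ?oc_size // all_rcons all_rcons;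
  rewrite size_rcons Hs Hall /= eqxx /=.
- split => //; first by apply/andP; split => //; lra.
  rewrite /good /= eqxx H0 /=; apply/andP; split; first by apply/andP; split; lra.
  apply/allP => q /(allP Hg); rewrite /good.
  case: (_ == 0%N); case/andP => -> H //; lra.
- split => //; first lra.
    by rewrite andbT; lra.
  rewrite /good /= eqxx H0 /=; apply/andP; split; first by apply/andP; split; lra.
  apply/allP => q /(allP Hg); rewrite /good.
  case: (_ == 0%N); case/andP => -> H //; lra.
Qed.

End Aux.

Lemma sum_count_col (A : Type) (k : nat) (P : pred (A * 'I_k)) (l : seq (A * 'I_k)) :
  (\sum_(j < k) count (fun q => (q.2 == j) && P q) l)%N = count P l.
Proof.
elim: l => [|a l IH] /=; first by rewrite big1.
rewrite big_split /= IH; congr (_ + _)%N.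
rewrite (bigD1 a.2) //= eqxx /= big1 ?addn0 // => j /negbTE Hj.
by rewrite eq_sym Hj.
Qed.

Lemma sorted0 (R : realType) (s : seq (R * R)) :
  all (fun I : R * R => (I.1 == 0)%R) s -> sorted (fun I J : R * R => (I.1 <= J.1)%R) s.
Proof.
case: s => // x s; elim: s x => [|y s IH] x //= /and3P [/eqP Hx /eqP Hy Hs].
rewrite Hx Hy lexx /=; apply: IH; by rewrite /= Hy eqxx.
Qed.

Theorem theorem8 (R : realType) (k : nat) (hk : (2 <= k)%N)
  (alg : online_algorithm R k) (M : nat) :
  exists s : seq (R * R),
    valid_input s /\ imbalance_gt s (online_coloring alg s) M.
Proof.
pose n := (k * (2 * M)).+1.
have := build_inv alg n.
case: (build alg n) => [[s f] p] [Hs Hf Hfp Hall Hg].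
exists s; split.
  rewrite /valid_input; apply/andP; split.
    by apply/allP => I /(allP Hall) /andP [/eqP -> ->].
  by apply: sorted0; apply/allP => I /(allP Hall) /andP [].
set chi := online_coloring alg s.
have k0 : (0 < k)%N by apply: ltnW.
pose i0 : 'I_k := Ordinal k0.
pose i1 : 'I_k := Ordinal hk.
pose u := count (fun q : (R * R) * 'I_k => q.2 == i0) (zip s chi).
have Hz : size (zip s chi) = n by rewrite size_zip oc_size minnn.
have A0 : color_count s chi i0 p = u.
  rewrite /color_count /u; apply: eq_in_count => q /(allP Hg).
  rewrite /good /contains; case Hq: (q.2 == i0) => //=.
  rewrite (eqP Hq) /= => /andP [/andP [/eqP -> _] ->].
  by rewrite ltW ?(le_lt_trans Hf Hfp).
have A1 : color_count s chi i1 p = 0%N.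
  rewrite /color_count; apply/eqP; rewrite -leqn0 leqNgt -has_count.
  apply/hasPn => q /(allP Hg); rewrite /good /contains /= => Hgq.
  case Hq: (q.2 == i1) => //=.
  move: Hgq; rewrite (eqP Hq) /=.
  case/andP => /andP [/eqP -> _] H; apply/negP => /andP [_ H2].
  by have := le_trans H2 H; rewrite leNgt Hfp.
have B j : color_count s chi j 0 = count (fun q : (R * R) * 'I_k => q.2 == j) (zip s chi).
  rewrite /color_count; apply: eq_in_count => q /(allP Hg).
  rewrite /good /contains; case/andP => /andP [/eqP -> ->] _.
  by rewrite lexx !andbT.
have C : (\sum_(j < k) count (fun q : (R * R) * 'I_k => q.2 == j) (zip s chi))%N = n.
  have := sum_count_col predT (zip s chi).
  rewrite count_predT Hz => <-; apply: eq_bigr => j _.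
  by apply: eq_count => q; rewrite andbT.
case: (leqP u M) => Hu; last first.
  exists p, i0, i1; rewrite A0 A1 subr0 absz_nat //.
case: (boolP [exists j : 'I_k, (u + M < color_count s chi j 0)%N]).
  case/existsP => j Hj; exists 0%R, j, i0.
  rewrite B in Hj; rewrite !B -/u.
  move: Hj; set a := count _ _ => Hj.
  have Hua : (u <= a)%N by lia.
  rewrite subzn // absz_nat; lia.
rewrite negb_exists => /forallP Hall2.
exfalso.
have : (n <= k * (2 * M))%N.
  rewrite -C -[k in (_ <= k * _)%N]card_ord -sum_nat_const.
  apply: leq_sum => j _; rewrite -B.
  have := Hall2 j; rewrite -leqNgt => H; apply: leq_trans H _.
  lia.
by rewrite ltnn.
Qed.
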